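(* Let $E$ be a finite-dimensional real Euclidean space with inner product $\langle\cdot,\cdot\rangle$, let $\|\cdot\|_{(1)},\dots,\|\cdot\|_{(n)}$ be norms on $E$, and for each $i$ let $\mathrm{LMO}_i$ be a linear minimization oracle for the unit ball of $\|\cdot\|_{(i)}$, i.e. $\mathrm{LMO}_i(\mathbf{M})\in\arg\min_{\|\mathbf{D}\|_{(i)}\le1}\langle\mathbf{M},\mathbf{D}\rangle$. Consider the LMO-based algorithms $\mathbf{X}^{t+1}-\mathbf{X}^t=\gamma_t\,\mathrm{LMO}_i(\mathbf{M}^t)$, $i=1,\dots,n$. For arbitrary $\alpha_1,\dots,\alpha_n\ge 0$, not all zero, the algorithm with update $$\mathbf{X}^{t+1}-\mathbf{X}^t=\gamma_t\sum_{i=1}^n\alpha_i\,\mathrm{LMO}_i(\mathbf{M}^t)$$ is itself an LMO-based algorithm: its update is $\mathbf{X}^{t+1}-\mathbf{X}^t=\gamma_t\,\mathrm{LMO}(\mathbf{M}^t)$ where $\mathrm{LMO}(\mathbf{M})\in\arg\min_{\|\mathbf{D}\|\le1}\langle\mathbf{M},\mathbf{D}\rangle$ is a linear minimization oracle for the unit ball of the norm $\|\cdot\|$ dual to $\sum_{i=1}^n\alpha_i\|\cdot\|_{(i)}^\dagger$.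
   Context: For a norm $\|\cdot\|$ on $E$, its dual norm is $\|\mathbf{M}\|^\dagger=\sup_{\|\mathbf{D}\|\le1}\langle\mathbf{M},\mathbf{D}\rangle$. Here $\mathbf{M}^t\in E$ denotes the effective update direction at iteration $t$ (e.g. a stochastic gradient or a momentum buffer) and $\gamma_t>0$ is the step size; an LMO-based algorithm is one whose update has the form $\mathbf{X}^{t+1}=\mathbf{X}^t+\gamma_t\,\mathrm{LMO}(\mathbf{M}^t)$ for an LMO over the unit ball of some norm. *)

(* Defs.v *)
From HB Require Import structures.
From mathcomp Require Import all_boot all_order all_algebra.
From mathcomp Require Import all_classical all_reals.
Set Implicit Arguments. Unset Strict Implicit. Unset Printing Implicit Defensive.
Import Order.TTheory GRing.Theory Num.Theory.
Local Open Scope classical_set_scope.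
Local Open Scope ring_scope.

(* The Euclidean space E is modelled as row vectors 'rV[R]_d with the
   standard inner product. *)
Definition inner (R : realType) (d : nat) (u v : 'rV[R]_d) : R := (u *m v^T) 0 0.

Definition is_norm (R : realType) (d : nat) (N : 'rV[R]_d -> R) : Prop :=
  [/\ forall x, N x = 0 -> x = 0,
      forall (a : R) x, N (a *: x) = `|a| * N x &
      forall x y, N (x + y) <= N x + N y].

Definition dual_norm (R : realType) (d : nat) (N : 'rV[R]_d -> R)
  (M : 'rV[R]_d) : R :=
  sup [set inner M D | D in [set D | N D <= 1]].

Definition is_LMO (R : realType) (d : nat) (N : 'rV[R]_d -> R)
  (L : 'rV[R]_d -> 'rV[R]_d) : Prop :=
  forall M, N (L M) <= 1 /\ (forall D, N D <= 1 -> inner M (L M) <= inner M D).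

(* Main.v *)
Require Import Defs.
From mathcomp Require Import all_boot all_order all_algebra.
From mathcomp Require Import all_classical all_reals.
Import Order.TTheory GRing.Theory Num.Theory.
Set Implicit Arguments. Unset Strict Implicit.
Local Open Scope classical_set_scope.
Local Open Scope ring_scope.

Lemma innerE (R : realType) (d : nat) (u v : 'rV[R]_d) :
  inner u v = \sum_k u 0 k * v 0 k.
Proof. by rewrite /inner mxE; apply: eq_bigr => k _; rewrite mxE. Qed.

Lemma innerC (R : realType) (d : nat) (u v : 'rV[R]_d) : inner u v = inner v u.
Proof. by rewrite !innerE; apply: eq_bigr => k _; rewrite mulrC. Qed.

Lemma innerZl (R : realType) (d : nat) (a : R) (u v : 'rV[R]_d) :
  inner (a *: u) v = a * inner u v.
Proof. by rewrite !innerE mulr_sumr; apply: eq_bigr => k _; rewrite mxE mulrA. Qed.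

Lemma innerZr (R : realType) (d : nat) (a : R) (u v : 'rV[R]_d) :
  inner u (a *: v) = a * inner u v.
Proof. by rewrite innerC innerZl innerC. Qed.

Lemma innerNl (R : realType) (d : nat) (u v : 'rV[R]_d) :
  inner (- u) v = - inner u v.
Proof. by rewrite -scaleN1r innerZl mulN1r. Qed.

Lemma innerNr (R : realType) (d : nat) (u v : 'rV[R]_d) :
  inner u (- v) = - inner u v.
Proof. by rewrite innerC innerNl innerC. Qed.

Lemma inner0r (R : realType) (d : nat) (u : 'rV[R]_d) : inner u 0 = 0.
Proof. by rewrite -(scale0r 0) innerZr mul0r. Qed.

Lemma inner0l (R : realType) (d : nat) (u : 'rV[R]_d) : inner 0 u = 0.
Proof. by rewrite innerC inner0r. Qed.

Lemma inner_suml (R : realType) (d n : nat) (a : 'I_n -> R) (u : 'I_n -> 'rV[R]_d) v :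
  inner (\sum_i a i *: u i) v = \sum_i a i * inner (u i) v.
Proof.
rewrite innerE.
under eq_bigr => k _ do rewrite summxE mulr_suml.
rewrite exchange_big /=; apply: eq_bigr => i _.
by rewrite innerE mulr_sumr; apply: eq_bigr => k _; rewrite mxE mulrA.
Qed.

Lemma inner_self_eq0 (R : realType) (d : nat) (u : 'rV[R]_d) :
  inner u u <= 0 -> u = 0.
Proof.
rewrite innerE => h.
have h0 : \sum_k u 0 k * u 0 k = 0.
  apply/eqP; rewrite eq_le h /=; apply: sumr_ge0 => k _; by rewrite -expr2 sqr_ge0.
apply/rowP => k; rewrite mxE.
have /eqP := h0; rewrite psumr_eq0; last by move=> i _; rewrite -expr2 sqr_ge0.
by move/allP/(_ k (mem_index_enum _)); rewrite /= mulf_eq0 orbb => /eqP.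
Qed.


Lemma norm0 (R : realType) (d : nat) (N : 'rV[R]_d -> R) : is_norm N -> N 0 = 0.
Proof. by case=> _ hZ _; rewrite -(scale0r 0) hZ normr0 mul0r. Qed.

Lemma normN (R : realType) (d : nat) (N : 'rV[R]_d -> R) x : is_norm N -> N (- x) = N x.
Proof. by case=> _ hZ _; rewrite -scaleN1r hZ normrN1 mul1r. Qed.

Lemma norm_ge0 (R : realType) (d : nat) (N : 'rV[R]_d -> R) x : is_norm N -> 0 <= N x.
Proof.
move=> hN; have := hN; case=> _ _ hD.
have := hD x (- x); rewrite subrr norm0 // normN // => h.
by rewrite -(@pmulr_rge0 _ 2) // mulr2n mulrDl mul1r.
Qed.

Lemma dl_ub (R : realType) (d : nat) (N : 'rV[R]_d -> R) L X D :
  is_LMO N L -> N D <= 1 -> inner X D <= inner X (L (- X)).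
Proof.
move=> hL hD; have [_ h] := hL (- X); have := h D hD.
by rewrite !innerNl lerN2.
Qed.

Lemma dlE (R : realType) (d : nat) (N : 'rV[R]_d -> R) L X :
  is_LMO N L -> dual_norm N X = inner X (L (- X)).
Proof.
move=> hL; rewrite /dual_norm.
have hub : ubound [set inner X D | D in [set D | N D <= 1]] (inner X (L (- X))).
  by move=> _ [D hD <-]; exact: dl_ub.
have hin : [set inner X D | D in [set D | N D <= 1]] (inner X (L (- X))).
  by exists (L (- X)) => //; have [] := hL (- X).
apply/eqP; rewrite eq_le; apply/andP; split.
  by apply: ge_sup => //; exists (inner X (L (- X))).
by apply: sup_upper_bound => //; split; [exists (inner X (L (- X))) | exists (inner X (L (- X)))].
Qed.

Lemma dl_ge0 (R : realType) (d : nat) (N : 'rV[R]_d -> R) L X :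
  is_norm N -> is_LMO N L -> 0 <= inner X (L (- X)).
Proof.
move=> hN hL; rewrite -(inner0r X); apply (dl_ub _ hL).
by rewrite norm0.
Qed.

Lemma dl_scale (R : realType) (d : nat) (N : 'rV[R]_d -> R) L X D :
  is_norm N -> is_LMO N L -> inner X D <= N D * inner X (L (- X)).
Proof.
move=> hN hL; have hN' := hN; case: hN' => h0 hZ _.
have [hz|hpos] := eqVneq (N D) 0.
  by rewrite (h0 _ hz) inner0r norm0 // mul0r.
have hp : 0 < N D by rewrite lt_def hpos norm_ge0.
have := @dl_ub _ _ N L X ((N D)^-1 *: D) hL.
rewrite hZ ger0_norm ?invr_ge0 ?norm_ge0 // mulVf // lexx innerZr => /(_ isT).
by rewrite ler_pdivrMl.
Qed.

Lemma dl_homog (R : realType) (d : nat) (N : 'rV[R]_d -> R) L X (t : R) :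
  is_norm N -> is_LMO N L -> 0 <= t ->
  inner (t *: X) (L (- (t *: X))) = t * inner X (L (- X)).
Proof.
move=> hN hL ht; apply/eqP; rewrite eq_le; apply/andP; split.
  rewrite innerZl ler_wpM2l //; apply (dl_ub _ hL).
  by have [] := hL (- (t *: X)).
rewrite -innerZl; apply (dl_ub _ hL); by have [] := hL (- X).
Qed.

Lemma dl_opp (R : realType) (d : nat) (N : 'rV[R]_d -> R) L X :
  is_norm N -> is_LMO N L ->
  inner (- X) (L (- - X)) = inner X (L (- X)).
Proof.
move=> hN hL.
have H : forall Y, inner (- Y) (L (- - Y)) <= inner Y (L (- Y)).
  move=> Y; rewrite innerNl -innerNr; apply (dl_ub _ hL).
  by rewrite normN //; have [] := hL (- - Y).
apply/eqP; rewrite eq_le H /=.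
by have := H (- X); rewrite opprK.
Qed.

Lemma innerDl (R : realType) (d : nat) (u v w : 'rV[R]_d) :
  inner (u + v) w = inner u w + inner v w.
Proof. by rewrite !innerE -big_split; apply: eq_bigr => k _; rewrite mxE mulrDl. Qed.

Unset Implicit Arguments.
Unset Strict Implicit.

Theorem corollary5 (R : realType) (d n : nat)
  (norms : 'I_n -> 'rV[R]_d -> R) (LMOs : 'I_n -> 'rV[R]_d -> 'rV[R]_d)
  (alpha : 'I_n -> R) :
  (forall i, is_norm (norms i)) ->
  (forall i, is_LMO (norms i) (LMOs i)) ->
  (forall i, 0 <= alpha i) ->
  (exists i, alpha i != 0) ->
  let N := dual_norm (fun M => \sum_(i < n) alpha i * dual_norm (norms i) M) in
  let L := fun M => \sum_(i < n) alpha i *: LMOs i M in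
  [/\ is_norm N, is_LMO N L &
      forall (X Mt : nat -> 'rV[R]_d) (gamma : nat -> R),
        (forall t, X t.+1 - X t = gamma t *: \sum_(i < n) alpha i *: LMOs i (Mt t)) ->
        forall t, X t.+1 - X t = gamma t *: L (Mt t)].
Proof.
move=> hN hL ha [j hj] N L.
pose P := fun X : 'rV[R]_d => \sum_(i < n) alpha i * inner X (LMOs i (- X)).
have hNdef : N = dual_norm P.
  rewrite /N; congr dual_norm; apply: funext => M.
  by apply: eq_bigr => i _; rewrite (dlE _ (hL i)).
have hP0 : forall X, 0 <= P X.
  by move=> X; apply: sumr_ge0 => i _; rewrite mulr_ge0 // (dl_ge0 _ (hN i) (hL i)).
have hPZ : forall t X, 0 <= t -> P (t *: X) = t * P X.
  move=> t X ht; rewrite /P mulr_sumr; apply: eq_bigr => i _.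
  by rewrite (dl_homog _ (hN i) (hL i) ht) mulrCA.
have hPN : forall X, P (- X) = P X.
  by move=> X; apply: eq_bigr => i _; rewrite (dl_opp _ (hN i) (hL i)).
have haj : 0 < alpha j by rewrite lt_def hj ha.
have hPj : forall X, alpha j * inner X (LMOs j (- X)) <= P X.
  move=> X; rewrite /P (bigD1 j) //= lerDl; apply: sumr_ge0 => i _.
  by rewrite mulr_ge0 // (dl_ge0 _ (hN i) (hL i)).
have hbnd : forall D X, P X <= 1 -> inner D X <= norms j D / alpha j.
  move=> D X hX; rewrite innerC; apply: le_trans (dl_scale _ _ (hN j) (hL j)) _.
  rewrite ler_wpM2l ?(norm_ge0 _ (hN j)) // -[X in _ <= X]mulr1 ler_pdivlMl //.
  exact: le_trans (hPj X) hX.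
have hP00 : P 0 <= 1 by rewrite -(scale0r 0) hPZ ?lexx // mul0r ler01.
have hhas : forall D, has_sup [set inner D X | X in [set X | P X <= 1]].
  move=> D; split; first by exists (inner D 0), 0.
  by exists (norms j D / alpha j) => _ [X hX <-]; apply: hbnd.
have hNub : forall D X, P X <= 1 -> inner D X <= dual_norm P D.
  by move=> D X hX; apply: sup_upper_bound (hhas D) _ _; exists X.
have hNle : forall D c, (forall X, P X <= 1 -> inner D X <= c) -> dual_norm P D <= c.
  move=> D c hc; apply: ge_sup; first by exists (inner D 0), 0.
  by move=> _ [X hX <-]; apply: hc.
have hNge0 : forall D, 0 <= dual_norm P D.
  by move=> D; rewrite -(inner0r D); apply: hNub.
have hNZ1 : forall a D, dual_norm P (a *: D) <= `|a| * dual_norm P D.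
  move=> a D; apply: hNle => X hX; rewrite innerZl.
  have [ha0|ha0] := leP 0 a.
    by rewrite ger0_norm // ler_wpM2l //; apply: hNub.
  have hna : 0 <= - a by rewrite oppr_ge0 ltW.
  rewrite ltr0_norm // -mulrNN -innerNr ler_wpM2l //.
  by apply: hNub; rewrite hPN.
have hkey : forall Y D, dual_norm P D <= 1 -> inner Y D <= P Y.
  move=> Y D hD; apply/ler_addgt0Pr => e he.
  have hpe : 0 < P Y + e by rewrite ltr_wpDl.
  have := hNub D ((P Y + e)^-1 *: Y).
  have hpe' : 0 <= (P Y + e)^-1 by rewrite invr_ge0 ltW.
  rewrite hPZ // ler_pdivrMl // mulr1 lerDl ltW // => /(_ isT) h.
  rewrite innerC; move: (le_trans h hD); rewrite innerZr.
  by rewrite ler_pdivrMl // mulr1.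
rewrite hNdef; split.
- split.
  + move=> D hD0; apply: inner_self_eq0.
    have hpe : 0 < P D + 1 by rewrite ltr_wpDl.
    have := hNub D ((P D + 1)^-1 *: D).
    have hpe' : 0 <= (P D + 1)^-1 by rewrite invr_ge0 ltW.
    rewrite hPZ // ler_pdivrMl // mulr1 lerDl ler01 hD0 innerZr => /(_ isT).
    by rewrite pmulr_rle0 // invr_gt0.
  + move=> a D; apply/eqP; rewrite eq_le hNZ1 /=.
    have [->|a0] := eqVneq a 0.
      by rewrite normr0 mul0r hNge0.
    have := hNZ1 a^-1 (a *: D); rewrite scalerA mulVf // scale1r normrV ?unitfE //.
    by rewrite ler_pdivlMl ?normr_gt0.
  + move=> x y; apply: hNle => X hX; rewrite innerDl.
    by apply: lerD; apply: hNub.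
- move=> M; split.
  + apply: hNle => X hX; rewrite /L inner_suml; apply: le_trans hX.
    apply: ler_sum => i _; rewrite ler_wpM2l // innerC.
    by apply: (dl_ub _ (hL i)); have [] := hL i M.
  + move=> D hD.
    have := hkey (- M) D hD.
    rewrite innerNl /P; under eq_bigr => i _ do rewrite opprK innerNl mulrN.
    rewrite sumrN lerNl opprK => h; apply: le_trans h.
    rewrite /L innerC inner_suml le_eqVlt; apply/orP; left; apply/eqP.
    by apply: eq_bigr => i _; rewrite innerC.
- by move=> X Mt gamma hX t; rewrite hX.
Qed.
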